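(* For every integer $n\ge 2$, \[ \gamma_{2t}(K_n\Box K_{n+1})=\begin{cases}(3n+2)/2, & n\equiv 0\pmod 2,\\ (3n+3)/2, & n\equiv 1\pmod 2.\end{cases} \]
   Context: For a graph $G=(V,E)$, a set $S\subseteq V$ is a total $2$-dominating set if every vertex of $V$ (including those in $S$) is adjacent to at least $2$ vertices of $S$; $\gamma_{2t}(G)$ is the minimum cardinality of such a set. $G\Box H$ denotes the Cartesian product: vertex set $V(G)\times V(H)$, with $(u_1,v_1)\sim(u_2,v_2)$ iff either $u_1=u_2$ and $v_1\sim v_2$, or $v_1=v_2$ and $u_1\sim u_2$. $K_n$ is the complete graph on $n$ vertices. *)

(* Defs.v *)
From mathcomp Require Import all_boot all_order.
Set Implicit Arguments. Unset Strict Implicit. Unset Printing Implicit Defensive.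

Definition complete_rel (n : nat) : rel 'I_n := fun x y => x != y.

Definition cart_rel (T U : finType) (eG : rel T) (eH : rel U) : rel (T * U) :=
  fun p q => ((p.1 == q.1) && eH p.2 q.2) || ((p.2 == q.2) && eG p.1 q.1).

Definition total2dom (T : finType) (e : rel T) (S : {set T}) : bool :=
  [forall x, 2 <= #|[set y in S | e x y]|].

(* gamma_{2t}: minimum cardinality of a total 2-dominating set
   (default #|T|.+1 if none exists) *)
Definition gamma2t (T : finType) (e : rel T) : nat :=
  \big[minn/#|T|.+1]_(S : {set T} | total2dom e S) #|S|.

(* Main.v *)
Require Import Defs.
From mathcomp Require Import all_boot all_order all_algebra.
From mathcomp Require Import lra zify.
Set Implicit Arguments. Unset Strict Implicit. Unset Printing Implicit Defensive.
Import Order.TTheory GRing.Theory Num.Theory.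


Section Lower.
Variables (T U : finType) (S : {set T * U}).
Let e := cart_rel (fun x y : T => x != y) (fun x y : U => x != y).
Definition rowset i := [set j | (i, j) \in S].
Definition colset j := [set i | (i, j) \in S].

Lemma nbr_bound i j :
  #|[set y in S | e (i, j) y]| + 2 * ((i, j) \in S) <= #|rowset i| + #|colset j|.
Proof.
rewrite (cardsD1 j (rowset i)) (cardsD1 i (colset j)) !inE.
set A := (fun b => (i, b)) @: (rowset i :\ j).
set B := (fun a => (a, j)) @: (colset j :\ i).
have sub : [set y in S | e (i, j) y] \subset A :|: B.
  apply/subsetP => -[a b]; rewrite inE /e /cart_rel /= => /andP [yS].
  case/orP => /andP [/eqP E1 H].
    subst a; apply/setUP; left; apply/imsetP; exists b => //.
    by rewrite !inE yS eq_sym H.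
  subst b; apply/setUP; right; apply/imsetP; exists a => //.
  by rewrite !inE yS eq_sym H.
have h1 := subset_leq_card sub.
have h2 : #|[set y in S | e (i, j) y]| <= #|A| + #|B|.
  by rewrite -cardsUI; exact: leq_trans h1 (leq_addr _ _).
clear h1.
have h3 : #|A| <= #|rowset i :\ j| by apply: leq_imset_card.
have h4 : #|B| <= #|colset j :\ i| by apply: leq_imset_card.
move: h2 h3 h4; clear; move: #|[set y in S | e (i, j) y]| #|A| #|B| #|rowset i :\ j| #|colset j :\ i| ((i,j) \in S) => N a b r c [] /=; lia.
Qed.

Hypothesis HS : total2dom e S.

Lemma tot_rc i j : 2 + 2 * ((i, j) \in S) <= #|rowset i| + #|colset j|.
Proof.
have := nbr_bound i j; move/forallP: HS => /(_ (i, j)).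
move: #|[set y in S | e (i, j) y]| ((i,j) \in S) #|rowset i| #|colset j| => N [] a b /=; lia.
Qed.

Lemma card_rows : #|S| = \sum_i #|rowset i|.
Proof.
rewrite -sum1_card.
transitivity (\sum_i \sum_(j | (i, j) \in S) 1).
  rewrite pair_big_dep /=; apply: eq_bigl => -[a b] //.
by apply: eq_bigr => i _; rewrite sum1_card; apply: eq_card => j; rewrite inE.
Qed.

Lemma card_sum (V : finType) (A : {set V}) : #|A| = \sum_j (j \in A : nat).
Proof. by rewrite -sum1_card big_mkcond /=; apply: eq_bigr => j _; case: (j \in A). Qed.

Lemma card_cols : #|S| = \sum_j #|colset j|.
Proof.
rewrite card_rows.
under eq_bigr => i _ do rewrite card_sum.
rewrite exchange_big /=; apply: eq_bigr => j _.
by rewrite card_sum; apply: eq_bigr => i _; rewrite !inE.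
Qed.

Open Scope ring_scope.
Lemma sumS1 (F : T * U -> rat) :
  \sum_(s in S) F s = \sum_i \sum_(j | (i, j) \in S) F (i, j).
Proof. by rewrite pair_big_dep /=; apply: eq_big => -[a b]. Qed.

Lemma sumS2 (F : T * U -> rat) :
  \sum_(s in S) F s = \sum_j \sum_(i | (i, j) \in S) F (i, j).
Proof.
rewrite sumS1.
under eq_bigr => i _ do rewrite big_mkcond /=.
rewrite exchange_big /=; apply: eq_bigr => j _.
by rewrite [RHS]big_mkcond.
Qed.

Lemma const_sum (V : finType) (A : {set V}) (x : rat) :
  \sum_(j | j \in A) x = x * #|A|%:R.
Proof. by rewrite sumr_const mulr_natr. Qed.

Lemma wsum_rows : (forall i, (0 < #|rowset i|)%N) ->
  \sum_(s in S) (#|rowset s.1|%:R)^-1 = #|T|%:R :> rat.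
Proof.
move=> pos; rewrite sumS1 /=.
transitivity (\sum_(i : T) (1 : rat)); last by rewrite sumr_const.
apply: eq_bigr => i _.
rewrite (eq_bigl (fun j => j \in rowset i)); last by move=> j; rewrite inE.
rewrite const_sum mulVf //; rewrite pnatr_eq0 -lt0n; exact: pos.
Qed.

Lemma wsum_cols : (forall j, (0 < #|colset j|)%N) ->
  \sum_(s in S) (#|colset s.2|%:R)^-1 = #|U|%:R :> rat.
Proof.
move=> pos; rewrite sumS2 /=.
transitivity (\sum_(j : U) (1 : rat)); last by rewrite sumr_const.
apply: eq_bigr => j _.
rewrite (eq_bigl (fun i => i \in colset j)); last by move=> i; rewrite inE.
rewrite const_sum mulVf //; rewrite pnatr_eq0 -lt0n; exact: pos.
Qed.
End Lower.

Open Scope ring_scope.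
Lemma invle (k m : nat) : (0 < k)%N -> (k <= m)%N -> (m%:R)^-1 <= (k%:R)^-1 :> rat.
Proof.
move=> k0 km; rewrite lef_pV2 ?ler_nat // posrE ltr0n //; exact: leq_trans km.
Qed.

Lemma inv_bound (r c : nat) : (1 <= r)%N -> (1 <= c)%N -> (4 <= r + c)%N ->
  (r%:R)^-1 + (c%:R)^-1 <= 4 / 3 :> rat.
Proof.
move=> r1 c1 rc.
have i1 : forall m, (1 <= m)%N -> (m%:R)^-1 <= 1 :> rat.
  by move=> m m1; have := invle (isT : (0 < 1)%N) m1; rewrite invr1.
have i2 : forall m, (2 <= m)%N -> (m%:R)^-1 <= 2^-1 :> rat.
  by move=> m m1; exact: invle (isT : (0 < 2)%N) m1.
have i3 : forall m, (3 <= m)%N -> (m%:R)^-1 <= 3^-1 :> rat.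
  by move=> m m1; exact: invle (isT : (0 < 3)%N) m1.
case: r r1 rc => [|[|[|r]]] // _ rc.
- have := i3 c ltac:(lia); rewrite invr1; lra.
- have := i2 c ltac:(lia); have := i2 2%N isT; lra.
- have := i1 c c1; have := i3 r.+3 isT; set u := (r.+3%:R)^-1; set w := (c%:R)^-1; lra.
Qed.


Lemma lower (T U : finType) (S : {set T * U}) :
  total2dom (cart_rel (fun x y : T => x != y) (fun x y : U => x != y)) S ->
  [\/ (2 * #|U| <= #|S|)%N, (2 * #|T| <= #|S|)%N | (3 * (#|T| + #|U|) <= 4 * #|S|)%N].
Proof.
move=> HS.
case: (boolP [exists i, #|rowset S i| == 0%N]) => [/existsP [i /eqP Hi]|nr].
  apply: Or31; rewrite (card_cols S) mulnC -sum_nat_const; apply: leq_sum => j _.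
  have := tot_rc HS i j; rewrite Hi; lia.
case: (boolP [exists j, #|colset S j| == 0%N]) => [/existsP [j /eqP Hj]|nc].
  apply: Or32; rewrite (card_rows S) mulnC -sum_nat_const; apply: leq_sum => i _.
  have := tot_rc HS i j; rewrite Hj; lia.
apply: Or33.
have pr : forall i, (0 < #|rowset S i|)%N.
  move=> i; rewrite lt0n; apply/negP => /eqP h; move/existsP: nr; apply; exists i; exact/eqP.
have pc : forall j, (0 < #|colset S j|)%N.
  move=> j; rewrite lt0n; apply/negP => /eqP h; move/existsP: nc; apply; exists j; exact/eqP.
have key : ((#|T| + #|U|)%:R <= 4 / 3 * #|S|%:R :> rat)%R.
  rewrite natrD -(wsum_rows pr) -(wsum_cols pc) -big_split /=.
  rewrite -sum1_card natr_sum mulr_sumr; apply: ler_sum => s sS.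
  rewrite mulr1; apply: inv_bound.
  - by apply: pr.
  - by apply: pc.
  - case: s sS => a b sS /=; have := tot_rc HS a b; rewrite sS; lia.
rewrite -(ler_nat rat) !natrM natrD.
move: key; rewrite natrD; lra.
Qed.

Close Scope ring_scope.

Section Crit.
Variables (T U : finType) (S : {set T * U}).
Let e := cart_rel (fun x y : T => x != y) (fun x y : U => x != y).

Definition has2 (x : T * U) :=
  exists y z, [/\ y \in S, z \in S, y != z, e x y & e x z].

Lemma has2_card x : has2 x -> 2 <= #|[set y in S | e x y]|.
Proof.
case=> y [z [yS zS yz exy exz]].
have sub : [set y; z] \subset [set y in S | e x y].
  by apply/subsetP => w; rewrite !inE => /orP [] /eqP ->; rewrite ?yS ?zS ?exy ?exz.
by have := subset_leq_card sub; rewrite cards2 yz.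
Qed.

Lemma crit :
  (forall i, exists j, (i, j) \in S) -> (forall j, exists i, (i, j) \in S) ->
  (forall x, x \in S -> has2 x) -> total2dom e S.
Proof.
move=> Hr Hc He; apply/forallP => -[i j]; apply: has2_card.
case: (boolP ((i, j) \in S)) => [/He //|xS].
have [b ib] := Hr i; have [a aj] := Hc j.
exists (i, b), (a, j); split => //.
- apply/negP => /eqP [E1 E2]; subst; by rewrite aj in xS.
- rewrite /e /cart_rel /= eqxx /=; apply/orP; left; apply/negP => /eqP E; subst; by rewrite ib in xS.
- rewrite /e /cart_rel /= eqxx /=; apply/orP; right; apply/negP => /eqP E; subst; by rewrite aj in xS.
Qed.
End Crit.

Section Constr.
Variable p : nat.
Local Notation n := p.+1.
Definition om (m a : nat) : 'I_m.+1 := Ordinal (ltn_pmod a (ltn0Sn m)).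
Definition vv (a b : nat) : 'I_n * 'I_n.+1 := (om p a, om n b).
Let e := cart_rel (fun x y : 'I_n => x != y) (fun x y : 'I_n.+1 => x != y).

Lemma vv_pair (i : 'I_n) (j : 'I_n.+1) : (i, j) = vv i j.
Proof. by congr pair; apply: val_inj; rewrite /= modn_small. Qed.

Lemma adj_vv a b c d : a < p.+1 -> b < p.+2 -> c < p.+1 -> d < p.+2 ->
  e (vv a b) (vv c d) = ((a == c) && (b != d)) || ((b == d) && (a != c)).
Proof.
move=> *; rewrite /e /cart_rel /= -!val_eqE /= !modn_small //.
Qed.

Lemma vv_neq a b c d : a < p.+1 -> b < p.+2 -> c < p.+1 -> d < p.+2 ->
  (vv a b != vv c d) = (a != c) || (b != d).
Proof.
move=> *; rewrite /vv xpair_eqE -!val_eqE /= !modn_small //; by case: (a == c).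
Qed.

End Constr.
Lemma two_nbrs p (S : {set 'I_p.+1 * 'I_p.+2}) a b c1 d1 c2 d2 :
  a < p.+1 -> b < p.+2 -> c1 < p.+1 -> d1 < p.+2 -> c2 < p.+1 -> d2 < p.+2 ->
  ((a == c1) && (b != d1)) || ((b == d1) && (a != c1)) ->
  ((a == c2) && (b != d2)) || ((b == d2) && (a != c2)) ->
  (c1 != c2) || (d1 != d2) ->
  vv p c1 d1 \in S -> vv p c2 d2 \in S -> has2 S (vv p a b).
Proof.
move=> *; exists (vv p c1 d1), (vv p c2 d2); split => //; rewrite ?vv_neq ?adj_vv //.
Qed.

Section S0.
Variable p : nat.
Local Notation n := p.+1.
Local Notation k := (p.+1 %/ 4).
Local Notation v := (vv p).

Definition blk (t : nat) : {set 'I_n * 'I_n.+1} :=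
  [set v (4*t) (4*t); v (4*t+1) (4*t); v (4*t+2) (4*t);
       v (4*t+3) (4*t+1); v (4*t+3) (4*t+2); v (4*t+3) (4*t+3)].

Definition tailS : {set 'I_n * 'I_n.+1} :=
  if n %% 4 == 0 then [set v 3 (4*k)]
  else if n %% 4 == 1 then [set v (4*k) 0; v (4*k) (4*k); v (4*k) (4*k+1)]
  else if n %% 4 == 2 then [set v (4*k) (4*k); v (4*k) (4*k+1); v (4*k) (4*k+2); v (4*k+1) 0]
  else [set v (4*k) (4*k); v (4*k+1) (4*k); v (4*k+2) (4*k);
            v (4*k+2) (4*k+1); v (4*k+2) (4*k+2); v (4*k+2) (4*k+3)].

Definition S0 := (\bigcup_(t < k) blk t) :|: tailS.


Lemma mem_blk_c t s a b : t < k -> s <= 2 -> a = 4*t+s -> b = 4*t -> v a b \in S0.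
Proof.
move=> tk hs -> ->; apply/setUP; left; apply/bigcupP; exists (Ordinal tk) => //=.
by case: s hs => [|[|[|]]] // _; rewrite !inE ?addn0 eqxx ?orbT.
Qed.

Lemma mem_blk_r t s a b : t < k -> 1 <= s <= 3 -> a = 4*t+3 -> b = 4*t+s -> v a b \in S0.
Proof.
move=> tk hs -> ->; apply/setUP; left; apply/bigcupP; exists (Ordinal tk) => //=.
by case: s hs => [|[|[|[|]]]] // _; rewrite !inE eqxx ?orbT.
Qed.

Lemma tail_mem x : x \in tailS -> x \in S0.
Proof. by move=> h; apply/setUP; right. Qed.

Lemma rem_cases : [\/ n %% 4 = 0, n %% 4 = 1, n %% 4 = 2 | n %% 4 = 3].
Proof.
have : n %% 4 < 4 by apply: ltn_pmod.
by case: (n %% 4) => [|[|[|[|]]]] //= _; [apply: Or41|apply: Or42|apply: Or43|apply: Or44].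
Qed.

Hypothesis hp : 2 <= p.

Lemma row_wit a : a < n -> exists b, b < n.+1 /\ v a b \in S0.
Proof.
move=> an; case: (ltnP a (4*k)) => ha.
  have tk : a %/ 4 < k by lia.
  case: (leqP (a %% 4) 2) => hs.
    exists (4 * (a %/ 4)); split; first lia.
    by apply: (mem_blk_c (t := a %/ 4) (s := a %% 4)) => //; lia.
  exists (4 * (a %/ 4) + 1); split; first lia.
  by apply: (mem_blk_r (t := a %/ 4) (s := 1)) => //; lia.
case: rem_cases => Hr.
- lia.
- exists 0; split => //; apply: tail_mem; rewrite /tailS Hr /=.
  have -> : a = 4 * k by lia.
  by rewrite !inE eqxx ?orbT.
- case: (ltnP a (4*k).+1) => ha2.
    exists (4 * k); split; first lia; apply: tail_mem; rewrite /tailS Hr /=.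
    have -> : a = 4 * k by lia.
    by rewrite !inE eqxx ?orbT.
  exists 0; split => //; apply: tail_mem; rewrite /tailS Hr /=.
  have -> : a = 4 * k + 1 by lia.
  by rewrite !inE eqxx ?orbT.
- exists (4 * k); split; first lia; apply: tail_mem; rewrite /tailS Hr /=.
  have H : a = 4 * k \/ a = 4 * k + 1 \/ a = 4 * k + 2 by lia.
  by case: H => [->|[->|->]]; rewrite !inE eqxx ?orbT.
Qed.

Lemma col_wit b : b < n.+1 -> exists a, a < n /\ v a b \in S0.
Proof.
move=> bn; case: (ltnP b (4*k)) => hb.
  have tk : b %/ 4 < k by lia.
  case: (posnP (b %% 4)) => hs.
    exists (4 * (b %/ 4)); split; first lia.
    by apply: (mem_blk_c (t := b %/ 4) (s := 0)) => //; lia.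
  exists (4 * (b %/ 4) + 3); split; first lia.
  by apply: (mem_blk_r (t := b %/ 4) (s := b %% 4)) => //; lia.
case: rem_cases => Hr.
- exists 3; split; first lia; apply: tail_mem; rewrite /tailS Hr /=.
  have -> : b = 4 * k by lia.
  by rewrite !inE eqxx ?orbT.
- exists (4 * k); split; first lia; apply: tail_mem; rewrite /tailS Hr /=.
  have H : b = 4 * k \/ b = 4 * k + 1 by lia.
  by case: H => ->; rewrite !inE eqxx ?orbT.
- exists (4 * k); split; first lia; apply: tail_mem; rewrite /tailS Hr /=.
  have H : b = 4 * k \/ b = 4 * k + 1 \/ b = 4 * k + 2 by lia.
  by case: H => [->|[->|->]]; rewrite !inE eqxx ?orbT.
- case: (ltnP b (4*k).+1) => hb2.
    exists (4 * k); split; first lia; apply: tail_mem; rewrite /tailS Hr /=.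
    have -> : b = 4 * k by lia.
    by rewrite !inE eqxx ?orbT.
  exists (4 * k + 2); split; first lia; apply: tail_mem; rewrite /tailS Hr /=.
  have H : b = 4 * k + 1 \/ b = 4 * k + 2 \/ b = 4 * k + 3 by lia.
  by case: H => [->|[->|->]]; rewrite !inE eqxx ?orbT.
Qed.

Ltac tn c1 d1 c2 d2 := apply: (@two_nbrs p S0 _ _ c1 d1 c2 d2); try lia.

Lemma elt_has2 x : x \in S0 -> has2 S0 x.
Proof.
case/setUP.
  case/bigcupP => [[t tk] _] /=.
  rewrite !inE; move=> /orP[/orP[/orP[/orP[/orP[H|H]|H]|H]|H]|H]; move/eqP: H => ->.
  - tn (4*t+1) (4*t) (4*t+2) (4*t).
    + by apply: (mem_blk_c (t:=t) (s:=1)); lia.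
    + by apply: (mem_blk_c (t:=t) (s:=2)); lia.
  - tn (4*t) (4*t) (4*t+2) (4*t).
    + by apply: (mem_blk_c (t:=t) (s:=0)); lia.
    + by apply: (mem_blk_c (t:=t) (s:=2)); lia.
  - tn (4*t) (4*t) (4*t+1) (4*t).
    + by apply: (mem_blk_c (t:=t) (s:=0)); lia.
    + by apply: (mem_blk_c (t:=t) (s:=1)); lia.
  - tn (4*t+3) (4*t+2) (4*t+3) (4*t+3).
    + by apply: (mem_blk_r (t:=t) (s:=2)); lia.
    + by apply: (mem_blk_r (t:=t) (s:=3)); lia.
  - tn (4*t+3) (4*t+1) (4*t+3) (4*t+3).
    + by apply: (mem_blk_r (t:=t) (s:=1)); lia.
    + by apply: (mem_blk_r (t:=t) (s:=3)); lia.
  - tn (4*t+3) (4*t+1) (4*t+3) (4*t+2).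
    + by apply: (mem_blk_r (t:=t) (s:=1)); lia.
    + by apply: (mem_blk_r (t:=t) (s:=2)); lia.
have k1 : n %% 4 != 3 -> 0 < k by lia.
rewrite /tailS; case: rem_cases => Hr; rewrite Hr /=.
- rewrite inE => /eqP ->; tn 3 1 3 2.
  + by apply: (mem_blk_r (t:=0) (s:=1)); lia.
  + by apply: (mem_blk_r (t:=0) (s:=2)); lia.
- rewrite !inE; move=> /orP[/orP[H|H]|H]; move/eqP: H => ->.
  + tn (4*k) (4*k) (4*k) (4*k+1); apply: tail_mem; by rewrite /tailS Hr /= !inE eqxx ?orbT.
  + tn (4*k) 0 (4*k) (4*k+1); apply: tail_mem; by rewrite /tailS Hr /= !inE eqxx ?orbT.
  + tn (4*k) 0 (4*k) (4*k); apply: tail_mem; by rewrite /tailS Hr /= !inE eqxx ?orbT.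
- rewrite !inE; move=> /orP[/orP[/orP[H|H]|H]|H]; move/eqP: H => ->.
  + tn (4*k) (4*k+1) (4*k) (4*k+2); apply: tail_mem; by rewrite /tailS Hr /= !inE eqxx ?orbT.
  + tn (4*k) (4*k) (4*k) (4*k+2); apply: tail_mem; by rewrite /tailS Hr /= !inE eqxx ?orbT.
  + tn (4*k) (4*k) (4*k) (4*k+1); apply: tail_mem; by rewrite /tailS Hr /= !inE eqxx ?orbT.
  + tn 0 0 1 0.
    * by apply: (mem_blk_c (t:=0) (s:=0)); lia.
    * by apply: (mem_blk_c (t:=0) (s:=1)); lia.
- rewrite !inE; move=> /orP[/orP[/orP[/orP[/orP[H|H]|H]|H]|H]|H]; move/eqP: H => ->.
  + tn (4*k+1) (4*k) (4*k+2) (4*k); apply: tail_mem; by rewrite /tailS Hr /= !inE eqxx ?orbT.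
  + tn (4*k) (4*k) (4*k+2) (4*k); apply: tail_mem; by rewrite /tailS Hr /= !inE eqxx ?orbT.
  + tn (4*k) (4*k) (4*k+1) (4*k); apply: tail_mem; by rewrite /tailS Hr /= !inE eqxx ?orbT.
  + tn (4*k+2) (4*k+2) (4*k+2) (4*k+3); apply: tail_mem; by rewrite /tailS Hr /= !inE eqxx ?orbT.
  + tn (4*k+2) (4*k+1) (4*k+2) (4*k+3); apply: tail_mem; by rewrite /tailS Hr /= !inE eqxx ?orbT.
  + tn (4*k+2) (4*k+1) (4*k+2) (4*k+2); apply: tail_mem; by rewrite /tailS Hr /= !inE eqxx ?orbT.
Qed.
End S0.
Lemma card_seq_le (V : finType) (s : seq V) (A : {set V}) :
  A \subset [set x in s] -> #|A| <= size s.
Proof. move=> h; apply: leq_trans (subset_leq_card h) _; rewrite cardsE; exact: card_size. Qed.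
Lemma card6 (V : finType) (a b c d e f : V) : #|[set a; b; c; d; e; f]| <= 6.
Proof. apply: (@card_seq_le _ [:: a;b;c;d;e;f]); apply/subsetP => x; rewrite !inE -!orbA; exact. Qed.
Lemma cardU_le (V : finType) (A B : {set V}) : #|A :|: B| <= #|A| + #|B|.
Proof. by rewrite -cardsUI leq_addr. Qed.
Lemma card_bigcup (V : finType) (F : nat -> {set V}) m k :
  (forall t, #|F t| <= m) -> #|\bigcup_(t < k) F t| <= k * m.
Proof.
move=> h; elim: k => [|k IH]; first by rewrite big_ord0 cards0.
rewrite big_ord_recr /= mulSn addnC; eapply leq_trans; [apply: cardU_le|].
by apply: leq_add.
Qed.

Lemma card3 (V : finType) (a b c : V) : #|[set a; b; c]| <= 3.
Proof. apply: (@card_seq_le _ [:: a;b;c]); apply/subsetP => x; rewrite !inE -!orbA; exact. Qed.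
Lemma card4 (V : finType) (a b c d : V) : #|[set a; b; c; d]| <= 4.
Proof. apply: (@card_seq_le _ [:: a;b;c;d]); apply/subsetP => x; rewrite !inE -!orbA; exact. Qed.

Lemma card_S0 p : 2 <= p -> #|S0 p| <= (3 * p.+1 + 3) %/ 2.
Proof.
move=> hp; rewrite /S0; eapply leq_trans; [apply: cardU_le|].
have h1 : #|\bigcup_(t < p.+1 %/ 4) blk p t| <= p.+1 %/ 4 * 6.
  by apply: card_bigcup => t; apply: card6.
case: (rem_cases p) => Hr; rewrite /tailS Hr /=;
  (eapply leq_trans; [apply: leq_add; [exact: h1|]|]).
- by apply: eq_leq; apply: cards1.
- lia.
- by apply: card3.
- lia.
- by apply: card4.
- lia.
- by apply: card6.
- lia.
Qed.

Lemma tot_S0 p : 2 <= p ->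
  total2dom (cart_rel (fun x y : 'I_p.+1 => x != y) (fun x y : 'I_p.+2 => x != y)) (S0 p).
Proof.
move=> hp; apply: crit.
- move=> i; have [b [bn bS]] := row_wit hp (ltn_ord i).
  by exists (om p.+1 b); rewrite vv_pair /= modn_small.
- move=> j; have [a [an aS]] := col_wit hp (ltn_ord j).
  by exists (om p a); rewrite vv_pair /= modn_small.
- exact: elt_has2.
Qed.

Definition S2 : {set 'I_2 * 'I_3} := [set vv 1 0 0; vv 1 0 1; vv 1 1 0; vv 1 1 1].

Lemma tot_S2 :
  total2dom (cart_rel (fun x y : 'I_2 => x != y) (fun x y : 'I_3 => x != y)) S2.
Proof.
apply/forallP => -[i j]; apply: has2_card; rewrite vv_pair.
have := ltn_ord i; have := ltn_ord j.
case: (nat_of_ord i) => [|[|a]] //; case: (nat_of_ord j) => [|[|[|b]]] // _ _.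
- apply: (@two_nbrs 1 S2 _ _ 0 1 1 0) => //; by rewrite !inE eqxx ?orbT.
- apply: (@two_nbrs 1 S2 _ _ 0 0 1 1) => //; by rewrite !inE eqxx ?orbT.
- apply: (@two_nbrs 1 S2 _ _ 0 0 0 1) => //; by rewrite !inE eqxx ?orbT.
- apply: (@two_nbrs 1 S2 _ _ 0 0 1 1) => //; by rewrite !inE eqxx ?orbT.
- apply: (@two_nbrs 1 S2 _ _ 0 1 1 0) => //; by rewrite !inE eqxx ?orbT.
- apply: (@two_nbrs 1 S2 _ _ 1 0 1 1) => //; by rewrite !inE eqxx ?orbT.
Qed.

Lemma bigmin_le (I : eqType) (r : seq I) (P : pred I) (F : I -> nat) x j :
  j \in r -> P j -> \big[minn/x]_(i <- r | P i) F i <= F j.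
Proof.
elim: r => //= a r IH; rewrite in_cons big_cons; case/orP => [/eqP <-|jr] Pj.
  by rewrite Pj geq_minl.
case: (P a); last exact: IH.
exact: leq_trans (geq_minr _ _) (IH jr Pj).
Qed.

Lemma gamma_le (T : finType) (e : rel T) (S : {set T}) :
  total2dom e S -> gamma2t e <= #|S|.
Proof. by move=> h; rewrite /gamma2t; apply: bigmin_le => //; rewrite mem_index_enum. Qed.

Lemma gamma_ge (T : finType) (e : rel T) (X : nat) :
  X <= #|T|.+1 -> (forall S : {set T}, total2dom e S -> X <= #|S|) -> X <= gamma2t e.
Proof.
move=> h1 h2; rewrite /gamma2t; apply: (big_ind (fun v => X <= v)) => //.
by move=> x y hx hy; rewrite leq_min hx hy.
Qed.

Theorem theorem14 (n : nat) (hn : 2 <= n) :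
  gamma2t (cart_rel (@complete_rel n) (@complete_rel n.+1)) =
  (if odd n then (3 * n + 3) %/ 2 else (3 * n + 2) %/ 2).
Proof.
have -> : (if odd n then (3 * n + 3) %/ 2 else (3 * n + 2) %/ 2) = (3 * n + 3) %/ 2.
  by case: ifP => H; lia.
apply/eqP; rewrite eqn_leq; apply/andP; split.
  case: n hn => [|p] // hp.
  case: (leqP 2 p) => hp2.
    apply: leq_trans (gamma_le (tot_S0 hp2)) (card_S0 hp2).
  have -> : p = 1 by lia.
  apply: leq_trans (gamma_le tot_S2) _.
  exact: card4.
apply: gamma_ge.
  rewrite card_prod !card_ord; nia.
move=> S HS; have [m Em] : exists m, #|S| = m by eexists.
have := lower HS; rewrite !card_ord !Em; case=> H; lia.
Qed.
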